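(* Let $\mathcal{A}$ be a weighted pushdown system. There exists an infinite path $\pi$ from the initial configuration with $\mathrm{LimInfAvg}(\pi)\geq 0$ if and only if for every $\epsilon>0$ there exists an infinite path $\pi_\epsilon$ from the initial configuration with $\mathrm{LimInfAvg}(\pi_\epsilon)>-\epsilon$.
   Context: A weighted pushdown system (WPS) is $\mathcal{A}=\langle Q,\Gamma,q_0,E,w\rangle$ with finite states $Q$, finite stack alphabet $\Gamma\ni\bot$ ($\bot$ never pushed or popped), edges $E\subseteq(Q\times\Gamma)\times(Q\times\mathrm{Com}(\Gamma))$ with $\mathrm{Com}(\Gamma)=\{\mathit{skip},\mathit{pop}\}\cup\{\mathit{push}(z)\}$, weights $w:E\to\mathbb{Z}$; initial configuration $(\bot,q_0)$; successor of $(\alpha,q)$ via edge $(q,\mathrm{Top}(\alpha),q',\mathit{com})$ is $(\mathit{com}(\alpha),q')$. For an infinite path $\pi$, $\mathrm{LimInfAvg}(\pi)=\liminf_i w(\pi[0,i])/i$ where $w(\pi[0,i])$ is the total weight of the first $i$ edges. *)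

(* Defs.v *)
From Stdlib Require Import Reals ZArith List FinFun.
Import ListNotations.
Open Scope R_scope.

Inductive com (G : Type) : Type :=
  | Skip : com G
  | Pop : com G
  | Push : G -> com G.
Arguments Skip {G}.
Arguments Pop {G}.
Arguments Push {G} _.

Definition edge (Q G : Type) : Type := ((Q * G) * (Q * com G))%type.
Definition e_src {Q G} (e : edge Q G) : Q := fst (fst e).
Definition e_top {Q G} (e : edge Q G) : G := snd (fst e).
Definition e_dst {Q G} (e : edge Q G) : Q := fst (snd e).
Definition e_com {Q G} (e : edge Q G) : com G := snd (snd e).

(* Configurations (alpha, q): stack as a list with its top at the head. *)
Definition config (Q G : Type) : Type := (list G * Q)%type.

(* Top of the stack (the default bot is never used on reachable stacks). *)
Definition Top {G} (bot : G) (alpha : list G) : G :=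
  match alpha with z :: _ => z | [] => bot end.

Definition apply_com {G} (c : com G) (alpha : list G) : list G :=
  match c with
  | Skip => alpha
  | Pop => tl alpha
  | Push z => z :: alpha
  end.

Definition wps_wf {Q G} (bot : G) (E : list (edge Q G)) : Prop :=
  forall e, In e E ->
    e_com e <> Push bot /\ (e_top e = bot -> e_com e <> Pop).

(* An infinite path from the initial configuration ([bot], q0), given as its
   sequence of edges; the configurations c i are the visited ones. *)
Definition is_path {Q G} (bot : G) (q0 : Q) (E : list (edge Q G))
  (p : nat -> edge Q G) : Prop :=
  exists c : nat -> config Q G,
    c 0%nat = ([bot], q0) /\
    forall i, In (p i) E /\
              e_src (p i) = snd (c i) /\
              e_top (p i) = Top bot (fst (c i)) /\
              c (S i) = (apply_com (e_com (p i)) (fst (c i)), e_dst (p i)).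

Fixpoint prefix_weight {Q G} (w : edge Q G -> Z) (p : nat -> edge Q G)
  (i : nat) : Z :=
  match i with
  | O => 0%Z
  | S k => (prefix_weight w p k + w (p k))%Z
  end.

Definition avg {Q G} (w : edge Q G -> Z) (p : nat -> edge Q G) (i : nat) : R :=
  IZR (prefix_weight w p i) / INR i.

Definition is_lower_bound (S : R -> Prop) (m : R) : Prop :=
  forall x, S x -> m <= x.
Definition is_glb (S : R -> Prop) (m : R) : Prop :=
  is_lower_bound S m /\ forall b, is_lower_bound S b -> b <= m.

Definition is_liminf (u : nat -> R) (l : R) : Prop :=
  exists t : nat -> R,
    (forall n, is_glb (fun x => exists k, (n <= k)%nat /\ x = u k) (t n)) /\
    is_lub (fun x => exists n, x = t n) l.

Definition is_LimInfAvg {Q G} (w : edge Q G -> Z) (p : nat -> edge Q G)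
  (l : R) : Prop :=
  is_liminf (avg w p) l.

(* Main.v *)
Require Import Defs.
From Stdlib Require Import Reals ZArith List FinFun Lia Lra Classical ClassicalEpsilon.
Import ListNotations.
Open Scope R_scope.

Fixpoint run {Q G} (bot : G) (q0 : Q) (p : nat -> edge Q G) (i : nat) : config Q G :=
  match i with
  | O => ([bot], q0)
  | S k => (apply_com (e_com (p k)) (fst (run bot q0 p k)), e_dst (p k))
  end.

Definition valid {Q G} (bot : G) (q0 : Q) (E : list (edge Q G)) (p : nat -> edge Q G) :=
  forall i, In (p i) E /\ e_src (p i) = snd (run bot q0 p i) /\
            e_top (p i) = Top bot (fst (run bot q0 p i)).

Lemma is_path_valid {Q G} (bot : G) (q0 : Q) E p :
  is_path bot q0 E p <-> valid bot q0 E p.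
Proof.
  split.
  - intros [c [H0 H]].
    assert (Hc : forall i, c i = run bot q0 p i).
    { induction i; simpl; auto. destruct (H i) as (_ & _ & _ & ->). rewrite IHi. reflexivity. }
    intros i. destruct (H i) as (A & B & C & _). rewrite <- Hc. auto.
  - intros H. exists (run bot q0 p). split; [reflexivity|].
    intros i. destruct (H i) as (A & B & C). repeat split; auto.
Qed.

Lemma run_ext {Q G} (bot : G) (q0 : Q) p p' n :
  (forall i, (i < n)%nat -> p i = p' i) -> run bot q0 p n = run bot q0 p' n.
Proof.
  induction n; intros H; simpl; auto.
  rewrite IHn by (intros; apply H; lia). rewrite H by lia. reflexivity.
Qed.

Lemma prefix_ext {Q G} (w : edge Q G -> Z) p p' n :
  (forall i, (i < n)%nat -> p i = p' i) -> prefix_weight w p n = prefix_weight w p' n.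
Proof.
  induction n; intros H; simpl; auto.
  rewrite IHn by (intros; apply H; lia). rewrite H by lia. reflexivity.
Qed.

Lemma run_stack {Q G} (bot : G) (q0 : Q) E p :
  wps_wf bot E -> valid bot q0 E p ->
  forall i, exists x, fst (run bot q0 p i) = x ++ [bot] /\ ~ In bot x.
Proof.
  intros Hwf Hv i. induction i.
  - exists []. simpl. auto.
  - destruct IHi as [x [Hx Hn]]. simpl.
    destruct (Hv i) as (Hin & _ & Ht). destruct (Hwf _ Hin) as [Hp Hpop].
    rewrite Hx. destruct (e_com (p i)) eqn:Hc; cbn [apply_com].
    + exists x; auto.
    + destruct x as [|z x].
      * exfalso. apply (Hpop). rewrite Ht, Hx. reflexivity. auto.
      * exists x. simpl in Hn. simpl. auto.
    + exists (g :: x). split; auto. simpl. intros [Heq|Hin']; [|auto].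
      apply Hp. rewrite Heq. reflexivity.
Qed.

Lemma run_nonempty {Q G} (bot : G) (q0 : Q) E p :
  wps_wf bot E -> valid bot q0 E p ->
  forall i, exists z a, fst (run bot q0 p i) = z :: a.
Proof.
  intros Hwf Hv i. destruct (run_stack bot q0 E p Hwf Hv i) as [x [Hx _]].
  rewrite Hx. destruct x; simpl; eauto.
Qed.

Definition splice {Q G} (P : nat -> edge Q G) (E : nat) (p : nat -> edge Q G) (a : nat) :=
  fun i => if Nat.ltb i E then P i else p (i - E + a)%nat.

Lemma apply_com_app {G} (c : com G) s l : s <> [] -> apply_com c (s ++ l) = apply_com c s ++ l.
Proof. intros H. destruct c; simpl; auto. destruct s; [congruence|reflexivity]. Qed.

Lemma Top_app {G} (bot : G) s l : s <> [] -> Top bot (s ++ l) = Top bot s.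
Proof. intros H. destruct s; [congruence|reflexivity]. Qed.

Lemma splice_lt {Q G} (P : nat -> edge Q G) E p a i : (i < E)%nat -> splice P E p a i = P i.
Proof. intros H. unfold splice. apply Nat.ltb_lt in H. rewrite H. auto. Qed.

Lemma splice_ge {Q G} (P : nat -> edge Q G) E p a t : splice P E p a (E + t)%nat = p (a + t)%nat.
Proof. unfold splice. destruct (Nat.ltb_spec (E+t) E); [lia|]. f_equal. lia. Qed.

Lemma splice_run {Q G} (bot : G) (q0 : Q) P E p a z alpha beta :
  fst (run bot q0 P E) = z :: beta -> fst (run bot q0 p a) = z :: alpha ->
  snd (run bot q0 P E) = snd (run bot q0 p a) ->
  (forall i, (a <= i)%nat -> (length (fst (run bot q0 p a)) <= length (fst (run bot q0 p i)))%nat) ->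
  forall t, exists s, s <> [] /\ fst (run bot q0 p (a + t)) = s ++ alpha /\
     run bot q0 (splice P E p a) (E + t) = (s ++ beta, snd (run bot q0 p (a + t))).
Proof.
  intros HP Hp Hs Hl t. induction t.
  - exists [z]. rewrite !Nat.add_0_r. split; [congruence|]. split; [auto|].
    rewrite (run_ext bot q0 _ P) by (intros; apply splice_lt; auto).
    destruct (run bot q0 P E) as [st qq]. simpl in *. rewrite <- Hs, HP. reflexivity.
  - destruct IHt as [s [Hne [H1 H2]]].
    exists (apply_com (e_com (p (a + t)%nat)) s).
    rewrite <- !plus_n_Sm. cbn [run]. rewrite H2, H1, splice_ge. cbn [fst snd].
    rewrite !apply_com_app by auto.
    split; [|split; reflexivity].
    specialize (Hl (S (a + t)) ltac:(lia)). cbn [run fst] in Hl.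
    rewrite H1, Hp, apply_com_app in Hl by auto.
    intros He. rewrite He in Hl. simpl in Hl. lia.
Qed.

Lemma splice_valid {Q G} (bot : G) (q0 : Q) Ed P E p a z alpha beta :
  valid bot q0 Ed P -> valid bot q0 Ed p ->
  fst (run bot q0 P E) = z :: beta -> fst (run bot q0 p a) = z :: alpha ->
  snd (run bot q0 P E) = snd (run bot q0 p a) ->
  (forall i, (a <= i)%nat -> (length (fst (run bot q0 p a)) <= length (fst (run bot q0 p i)))%nat) ->
  valid bot q0 Ed (splice P E p a).
Proof.
  intros HvP Hvp HP Hp Hs Hl i.
  destruct (Nat.ltb_spec i E) as [Hi|Hi].
  - rewrite splice_lt by auto.
    rewrite (run_ext bot q0 _ P) by (intros; apply splice_lt; lia). apply HvP.
  - replace i with (E + (i - E))%nat by lia. set (t := (i - E)%nat).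
    rewrite splice_ge.
    destruct (splice_run bot q0 P E p a z alpha beta HP Hp Hs Hl t) as [s [Hne [H1 H2]]].
    rewrite H2. cbn [fst snd]. destruct (Hvp (a + t)%nat) as (A & B & C).
    rewrite H1 in C. rewrite Top_app in * by auto. auto.
Qed.

Lemma splice_prefix {Q G} (w : edge Q G -> Z) P E p a t :
  prefix_weight w (splice P E p a) (E + t) =
  (prefix_weight w P E + prefix_weight w p (a + t) - prefix_weight w p a)%Z.
Proof.
  induction t.
  - rewrite !Nat.add_0_r. rewrite (prefix_ext w _ P) by (intros; apply splice_lt; auto). lia.
  - rewrite <- !plus_n_Sm. simpl. rewrite IHt, splice_ge. lia.
Qed.

Lemma exists_min (P : nat -> Prop) : (exists n, P n) -> exists n, P n /\ forall m, P m -> (n <= m)%nat.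
Proof.
  intros [n Hn]. revert Hn. induction n as [n IH] using (well_founded_induction lt_wf).
  intros Hn. destruct (classic (exists m, P m /\ (m < n)%nat)) as [[m [Hm Hlt]]|Hno].
  - exact (IH m Hlt Hm).
  - exists n. split; auto. intros m Hm. destruct (Nat.le_gt_cases n m); auto.
    exfalso. apply Hno. eauto.
Qed.

Definition step {Q G} (bot : G) (q0 : Q) p b :=
  forall i, (b <= i)%nat -> (length (fst (run bot q0 p b)) <= length (fst (run bot q0 p i)))%nat.

Lemma steps_inf {Q G} (bot : G) (q0 : Q) p M : exists b, (M <= b)%nat /\ step bot q0 p b.
Proof.
  destruct (exists_min (fun h => exists i, (M <= i)%nat /\ length (fst (run bot q0 p i)) = h))
    as [h [[i [Hi Hh]] Hmin]].
  { eauto. }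
  exists i. split; auto. intros j Hj. rewrite Hh. apply Hmin. exists j. split; [lia|auto].
Qed.

Lemma pigeon {A} (l : list A) (P : nat -> A -> Prop) :
  (forall M, exists n, (M <= n)%nat /\ exists x, In x l /\ P n x) ->
  exists x, In x l /\ forall M, exists n, (M <= n)%nat /\ P n x.
Proof.
  induction l as [|y l IH]; intros H.
  - destruct (H 0%nat) as [n [_ [x [[] _]]]].
  - destruct (classic (forall M, exists n, (M <= n)%nat /\ P n y)) as [Hy|Hy].
    + exists y. split; [left; auto|auto].
    + apply not_all_ex_not in Hy. destruct Hy as [M0 HM0].
      destruct IH as [x [Hx Hx2]].
      * intros M. destruct (H (Nat.max M M0)) as [n [Hn [x [Hx HP]]]].
        exists n. split; [lia|]. exists x. split; auto.
        destruct Hx as [<-|Hx]; auto. exfalso. apply HM0. exists n. split; [lia|auto].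
      * exists x. split; [right; auto|auto].
Qed.

Lemma Rabs_le_inv' x B : Rabs x <= B -> - B <= x <= B.
Proof. unfold Rabs; destruct (Rcase_abs x); lra. Qed.

Lemma liminf_tail u l eps : is_liminf u l -> l > - eps ->
  exists n0, forall k, (n0 <= k)%nat -> u k > - eps.
Proof.
  intros [t [Ht [Hub Hlub]]] Hl.
  destruct (classic (exists n0, t n0 > - eps)) as [[n0 Hn0]|Hno].
  - exists n0. intros k Hk. destruct (Ht n0) as [Hlb _].
    assert (t n0 <= u k) by (apply Hlb; eauto). lra.
  - exfalso. assert (l <= - eps).
    { apply Hlub. intros x [n ->]. apply Rnot_gt_le. intros Hc. apply Hno. eauto. }
    lra.
Qed.

Lemma glb_tail u B n : (forall k, Rabs (u k) <= B) ->
  { m | is_glb (fun x => exists k, (n <= k)%nat /\ x = u k) m }.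
Proof.
  intros HB.
  destruct (completeness (fun x => exists k, (n <= k)%nat /\ x = - u k)) as [m [Hm1 Hm2]].
  - exists B. intros x [k [_ ->]]. specialize (HB k). apply Rabs_le_inv' in HB. lra.
  - exists (- u n). exists n. split; auto.
  - exists (- m). split.
    + intros x [k [Hk ->]]. assert (- u k <= m) by (apply Hm1; eauto). lra.
    + intros b Hb. assert (m <= - b).
      { apply Hm2. intros x [k [Hk ->]]. assert (b <= u k) by (apply Hb; eauto). lra. }
      lra.
Qed.

Lemma liminf_exists u B : (forall k, Rabs (u k) <= B) ->
  (forall eps, eps > 0 -> exists K, forall k, (K <= k)%nat -> u k >= - eps) ->
  exists l, is_liminf u l /\ l >= 0.
Proof.
  intros HB Hev.
  set (t := fun n => proj1_sig (glb_tail u B n HB)).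
  assert (Ht : forall n, is_glb (fun x => exists k, (n <= k)%nat /\ x = u k) (t n))
    by (intros n; unfold t; destruct (glb_tail u B n HB); auto).
  destruct (completeness (fun x => exists n, x = t n)) as [l Hl].
  - exists B. intros x [n ->]. destruct (Ht n) as [Hlb _].
    assert (t n <= u n) by (apply Hlb; eauto). pose proof (Rabs_le_inv' _ _ (HB n)). lra.
  - exists (t 0%nat). eauto.
  - exists l. split. { exists t. split; auto. }
    apply Rnot_lt_ge. intros Hneg.
    destruct (Hev (- l / 2)) as [K HK]. { lra. }
    destruct (Ht K) as [_ Hg].
    assert (- (- l / 2) <= t K).
    { apply Hg. intros x [k [Hk ->]]. specialize (HK k Hk). lra. }
    destruct Hl as [Hub _]. assert (t K <= l) by (apply Hub; eauto). lra.
Qed.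

Lemma nat_above x : exists N : nat, x <= INR N.
Proof.
  destruct (archimed x) as [H1 _].
  exists (Z.to_nat (up x)). rewrite INR_IZR_INZ.
  destruct (Z_le_gt_dec 0 (up x)).
  - rewrite Z2Nat.id by auto. lra.
  - pose proof (pos_INR (Z.to_nat (up x))). rewrite INR_IZR_INZ in H.
    assert (IZR (up x) < 0) by (apply IZR_lt; lia). lra.
Qed.

Definition kat {Q G} (bot : G) (q0 : Q) p (q : Q) (g : G) b :=
  snd (run bot q0 p b) = q /\ exists al, fst (run bot q0 p b) = g :: al.

Lemma inv_le1 J : 0 <= J -> / (J + 1) <= 1.
Proof. intros. rewrite <- Rinv_1. apply Rinv_le_contravar; lra. Qed.

Lemma div_ge x K J : 0 <= J -> (J + 1) * K <= x -> K <= x / (J + 1).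
Proof.
  intros HJ H. unfold Rdiv. apply (Rmult_le_reg_l (J+1)); [lra|].
  replace ((J + 1) * (x * / (J + 1))) with x by (field; lra). lra.
Qed.

Lemma div_mono x J1 J2 : 0 <= x -> 0 <= J1 <= J2 -> x / (J2 + 1) <= x / (J1 + 1).
Proof.
  intros Hx HJ. unfold Rdiv. apply Rmult_le_compat_l; auto.
  apply Rinv_le_contravar; lra.
Qed.

Definition fam_prop {Q G} (bot : G) (q0 : Q) Ed (w : edge Q G -> Z) q g (j : nat)
  (x : (nat -> edge Q G) * nat * R) : Prop :=
  let p := fst (fst x) in let a := snd (fst x) in let C := snd x in
  valid bot q0 Ed p /\ step bot q0 p a /\ kat bot q0 p q g a /\
     (forall M, exists b, (M <= b)%nat /\ step bot q0 p b /\ kat bot q0 p q g b) /\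
     forall t, IZR (prefix_weight w p (a+t)) - IZR (prefix_weight w p a) >= - (INR t / (INR j + 1)) - C.

Definition Inv {Q G} (bot : G) (q0 : Q) Ed (w : edge Q G -> Z) q g (Rr : R) (fC : nat -> R)
  (j : nat) (x : (nat -> edge Q G) * nat) : Prop :=
  valid bot q0 Ed (fst x) /\ kat bot q0 (fst x) q g (snd x) /\ (1 <= snd x)%nat /\
  IZR (prefix_weight w (fst x) (snd x)) >= - (Rr / (INR j + 1)) * INR (snd x) /\
  fC (S j) <= INR (snd x) / (INR j + 1).

Definition Trans {Q G} (w : edge Q G -> Z) (Rr : R) (j : nat) (x y : (nat -> edge Q G) * nat) : Prop :=
  (snd x < snd y)%nat /\ (forall i, (i < snd x)%nat -> fst y i = fst x i) /\
  forall t, (snd x + t <= snd y)%nat ->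
    IZR (prefix_weight w (fst y) (snd x + t)) >= - ((Rr + 1) / (INR j + 1)) * INR (snd x + t).

Lemma trans_step {Q G} (bot : G) (q0 : Q) Ed (w : edge Q G -> Z) q g (B : R)
  (f : nat -> (nat -> edge Q G) * nat * R) :
  0 <= B ->
  (forall j, fam_prop bot q0 Ed w q g j (f j)) ->
  forall j x, Inv bot q0 Ed w q g (B + 2) (fun j => snd (f j)) j x ->
  exists y, Inv bot q0 Ed w q g (B + 2) (fun j => snd (f j)) (S j) y /\ Trans w (B + 2) j x y.
Proof.
  intros HB Hf j [P E] (HvP & [HqP [beta HgP]] & HE1 & HX & HCE). cbn [fst snd] in *.
  set (R := B + 2) in *.
  destruct (Hf (S j)) as (Hvp & Hsa & [Hqa [alpha Hga]] & Hinf & Hw).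
  set (p := fst (fst (f (S j)))) in *. set (a := snd (fst (f (S j)))) in *.
  set (C := snd (f (S j))) in *. set (C' := snd (f (S (S j)))).
  set (X := IZR (prefix_weight w P E)) in *.
  set (J := INR j).
  assert (HJ : 0 <= J) by apply pos_INR.
  assert (He : 1 <= INR E) by (apply (le_INR 1); auto).
  destruct (nat_above ((J + 2) * (R * INR E + Rabs C + Rabs C' + Rabs X) + 1)) as [N HN].
  destruct (Hinf (a + N)%nat) as [b (Hb & Hsb & [Hqb [al' Hgb]])].
  assert (Hs : snd (run bot q0 P E) = snd (run bot q0 p a)) by congruence.
  pose proof (splice_run bot q0 P E p a g alpha beta HgP Hga Hs Hsa) as Hsr.
  pose proof (splice_valid bot q0 Ed P E p a g alpha beta HvP Hvp HgP Hga Hs Hsa) as Hsv.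
  assert (HK0 : 0 <= R * INR E + Rabs C + Rabs C' + Rabs X).
  { pose proof (Rabs_pos C). pose proof (Rabs_pos C'). pose proof (Rabs_pos X).
    assert (0 <= R * INR E) by (apply Rmult_le_pos; unfold R; lra). lra. }
  assert (HN1 : (1 <= N)%nat).
  { apply INR_le. simpl. assert (0 <= (J + 2) * (R * INR E + Rabs C + Rabs C' + Rabs X))
      by (apply Rmult_le_pos; lra). lra. }
  set (d := (b - a)%nat).
  assert (HdN : (N <= d)%nat) by lia.
  assert (Hd : INR N <= INR d) by (apply le_INR; auto).
  exists (splice P E p a, (E + d)%nat). cbn [fst snd].
  assert (Hpref : forall t, IZR (prefix_weight w (splice P E p a) (E + t)) =
     X + (IZR (prefix_weight w p (a + t)) - IZR (prefix_weight w p a))).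
  { intros t. rewrite splice_prefix. rewrite minus_IZR, plus_IZR. unfold X. lra. }
  split; [split; [|split; [|split; [|split]]]|split; [|split]].
  all: cbn [fst snd].
  - exact Hsv.
  - unfold kat. destruct (Hsr d) as [s [Hne [H1 H2]]]. rewrite H2. split.
    + cbn [snd]. replace (a + d)%nat with b by lia. auto.
    + cbn [fst]. replace (a + d)%nat with b in H1 by lia. rewrite Hgb in H1.
      destruct s as [|z s]; [congruence|]. simpl in H1. inversion H1; subst.
      exists (s ++ beta). reflexivity.
  - lia.
  - rewrite Hpref. specialize (Hw d). rewrite S_INR. fold J.
    rewrite plus_INR. rewrite S_INR in Hw. fold J in Hw, HX.
    set (e := INR E) in *. set (Dd := INR d) in *.
    set (K := R * e + Rabs C + Rabs C' + Rabs X) in *.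
    set (u := Dd / (J + 1 + 1)).
    assert (f1 : R / (J + 1) * e <= R * e).
    { unfold Rdiv. rewrite (Rmult_comm R), Rmult_assoc. rewrite <- (Rmult_1_l (R * e)) at 2.
      apply Rmult_le_compat_r; [apply Rmult_le_pos; unfold R; lra|]. apply inv_le1; lra. }
    assert (f2 : K <= u) by (apply div_ge; lra).
    assert (Hu0 : 0 <= u) by (pose proof (Rabs_pos C); pose proof (Rabs_pos C');
       pose proof (Rabs_pos X); lra).
    assert (f3 : R * u >= 2 * u) by (unfold R; nra).
    assert (f4 : 0 <= R / (J + 1 + 1) * e).
    { unfold Rdiv. apply Rmult_le_pos; [apply Rmult_le_pos; [unfold R; lra|] |lra].
      left; apply Rinv_0_lt_compat; lra. }
    assert (f5 : - (R / (J + 1 + 1)) * (e + Dd) = - (R / (J + 1 + 1) * e) - R * u)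
      by (unfold u; field; lra).
    assert (f6 : - (R / (J + 1)) * e = - (R / (J + 1) * e)) by ring.
    pose proof (Rle_abs C). pose proof (Rabs_pos C'). pose proof (Rabs_pos X).
    fold u in Hw. clear -Hw HX f1 f2 Hu0 f3 f4 f5 f6 H H0 H1. unfold K in f2. clearbody R u. lra.
  - rewrite S_INR. fold J. rewrite plus_INR.
    set (e := INR E) in *. set (Dd := INR d) in *.
    assert (f2 : (R * e + Rabs C + Rabs C' + Rabs X) <= Dd / (J + 1 + 1)) by (apply div_ge; lra).
    assert (f4 : 0 <= e / (J + 1 + 1)).
    { unfold Rdiv. apply Rmult_le_pos; [lra|]. left; apply Rinv_0_lt_compat; lra. }
    assert (f5 : (e + Dd) / (J + 1 + 1) = e / (J + 1 + 1) + Dd / (J + 1 + 1)) by (field; lra).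
    assert (0 <= R * e) by (apply Rmult_le_pos; unfold R; lra).
    pose proof (Rle_abs C'). pose proof (Rabs_pos C). pose proof (Rabs_pos X). fold C'. lra.
  - lia.
  - intros i Hi. apply splice_lt. auto.
  - intros t Ht. rewrite Hpref. specialize (Hw t). rewrite S_INR in Hw. fold J in Hw |- *.
    rewrite plus_INR. fold J in HX, HCE.
    set (e := INR E) in *. set (T := INR t) in *.
    assert (HT : 0 <= T) by apply pos_INR.
    assert (g1 : T / (J + 1 + 1) <= T / (J + 1)).
    { replace (J + 1 + 1) with ((J + 1) + 1) by ring. apply div_mono; lra. }
    assert (g2 : 0 <= T / (J + 1)).
    { unfold Rdiv. apply Rmult_le_pos; [lra|]. left; apply Rinv_0_lt_compat; lra. }
    assert (g3 : T / (J + 1) <= (R + 1) * (T / (J + 1))).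
    { assert (0 <= R * (T / (J + 1))) by (apply Rmult_le_pos; unfold R; lra). lra. }
    assert (g4 : - ((R + 1) / (J + 1)) * (e + T) = - (R / (J + 1) * e) - e / (J + 1) - (R + 1) * (T / (J + 1)))
      by (field; lra).
    assert (g5 : - (R / (J + 1)) * e = - (R / (J + 1) * e)) by ring.
    lra.
Qed.

Lemma construct {Q G} (bot : G) (q0 : Q) Ed (w : edge Q G -> Z) q g (B : R) :
  0 <= B ->
  (forall p k, valid bot q0 Ed p -> Rabs (IZR (prefix_weight w p k)) <= B * INR k) ->
  (forall j, exists x, fam_prop bot q0 Ed w q g j x) ->
  exists ps, valid bot q0 Ed ps /\ forall eps, eps > 0 -> exists K, forall k, (K <= k)%nat ->
     IZR (prefix_weight w ps k) >= - eps * INR k.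
Proof.
  intros HB Hbound Hfam.
  assert (Hf : forall j, {x | fam_prop bot q0 Ed w q g j x})
    by (intros; apply constructive_indefinite_description; auto).
  set (f := fun j => proj1_sig (Hf j)).
  assert (Hfp : forall j, fam_prop bot q0 Ed w q g j (f j)) by (intros; unfold f; destruct (Hf j); auto).
  set (R := B + 2).
  set (I := Inv bot q0 Ed w q g R (fun j => snd (f j))).
  assert (H0 : exists x0, I 0%nat x0).
  { destruct (Hfp 0%nat) as (Hv & _ & _ & Hinf & _).
    destruct (nat_above (Rabs (snd (f 1%nat)))) as [N HN].
    destruct (Hinf (1 + N)%nat) as [b (Hb & _ & Hk)].
    exists (fst (fst (f 0%nat)), b). unfold I, Inv. cbn [fst snd].
    split; [auto|split; [auto|split; [lia|split]]].
    - simpl. replace (0 + 1) with 1 by ring. unfold Rdiv. rewrite Rinv_1, Rmult_1_r.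
      pose proof (Hbound _ b Hv). pose proof (Rabs_le_inv' _ _ H).
      assert (B * INR b <= R * INR b) by (apply Rmult_le_compat_r; [apply pos_INR|unfold R; lra]).
      lra.
    - simpl. replace (0 + 1) with 1 by ring. unfold Rdiv. rewrite Rinv_1, Rmult_1_r.
      pose proof (Rle_abs (snd (f 1%nat))). assert (INR N <= INR b) by (apply le_INR; lia). lra. }
  destruct H0 as [x0 Hx0].
  assert (HF : forall j x, exists y, I j x -> I (S j) y /\ Trans w R j x y).
  { intros j x. destruct (classic (I j x)) as [Hi|Hi].
    - destruct (trans_step bot q0 Ed w q g B f HB Hfp j x Hi) as [y Hy]. exists y. auto.
    - exists x. tauto. }
  assert (HF' : forall j x, {y | I j x -> I (S j) y /\ Trans w R j x y})
    by (intros; apply constructive_indefinite_description; auto).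
  set (F := fun j x => proj1_sig (HF' j x)).
  assert (HFp : forall j x, I j x -> I (S j) (F j x) /\ Trans w R j x (F j x))
    by (intros j x; unfold F; destruct (HF' j x); auto).
  set (sq := fun n => nat_rect (fun _ => ((nat -> edge Q G) * nat)%type) x0 (fun j acc => F j acc) n).
  assert (HsqS : forall n, sq (S n) = F n (sq n)) by reflexivity.
  assert (HI : forall n, I n (sq n)).
  { induction n; [exact Hx0|]. rewrite HsqS. apply HFp; auto. }
  assert (HT : forall n, Trans w R n (sq n) (sq (S n))).
  { intros n. rewrite HsqS. apply HFp; auto. }
  set (Ef := fun n => snd (sq n)). set (Pf := fun n => fst (sq n)).
  assert (HEs : forall n, (Ef n < Ef (S n))%nat) by (intros n; apply (HT n)).
  assert (HEge : forall n, (n < Ef n)%nat).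
  { induction n. - destruct (HI 0%nat) as (_ & _ & H & _). unfold Ef. lia.
    - specialize (HEs n). lia. }
  assert (HEmono : forall n m, (n <= m)%nat -> (Ef n <= Ef m)%nat).
  { intros n m Hnm. induction Hnm; auto. specialize (HEs m). lia. }
  assert (Hagree : forall n m, (n <= m)%nat -> forall i, (i < Ef n)%nat -> Pf m i = Pf n i).
  { intros n m Hnm. induction Hnm; intros i Hi; auto.
    destruct (HT m) as (_ & Hag & _). unfold Pf in *. rewrite Hag. apply IHHnm; auto.
    specialize (HEmono n m Hnm). unfold Ef in *. lia. }
  set (ps := fun i => Pf (S i) i).
  assert (Hps : forall n i, (i < Ef n)%nat -> ps i = Pf n i).
  { intros n i Hi. unfold ps. destruct (Nat.le_gt_cases n (S i)).
    - apply Hagree; auto.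
    - symmetry. apply Hagree; [lia|]. pose proof (HEge (S i)). lia. }
  exists ps. split.
  - intros i. destruct (HI (S i)) as (Hv & _).
    rewrite (run_ext bot q0 ps (Pf (S i))).
    + unfold ps at 1. apply Hv.
    + intros k Hk. apply Hps. pose proof (HEge (S i)). lia.
  - intros eps Heps.
    destruct (nat_above ((R + 1) / eps)) as [Jn HJn].
    assert (HJe : (R + 1) / (INR Jn + 1) <= eps).
    { assert (0 <= INR Jn) by apply pos_INR.
      assert (R + 1 <= eps * INR Jn).
      { apply (Rmult_le_compat_l eps) in HJn; [|lra].
        replace (eps * ((R + 1) / eps)) with (R + 1) in HJn by (field; lra). lra. }
      unfold Rdiv. apply (Rmult_le_reg_l (INR Jn + 1)); [lra|].
      replace ((INR Jn + 1) * ((R + 1) * / (INR Jn + 1))) with (R + 1) by (field; lra). nra. }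
    exists (Ef Jn). intros k Hk.
    assert (Hloc : forall d k, (Ef Jn <= k <= Ef (Jn + d))%nat ->
               exists j, (Jn <= j)%nat /\ (Ef j <= k <= Ef (S j))%nat).
    { induction d; intros k' Hk'.
      - exists Jn. rewrite Nat.add_0_r in Hk'. specialize (HEs Jn). split; lia.
      - destruct (Nat.le_gt_cases k' (Ef (Jn + d)%nat)).
        + apply IHd. lia.
        + exists (Jn + d)%nat. split; [lia|]. rewrite <- plus_n_Sm in Hk'. lia. }
    destruct (Hloc k k) as [j [Hj Hjk]].
    { split; auto. specialize (HEge (Jn + k)%nat). lia. }
    destruct (HT j) as (_ & _ & Hb).
    specialize (Hb (k - Ef j)%nat). fold (Ef j) (Ef (S j)) (Pf (S j)) in Hb.
    replace (Ef j + (k - Ef j))%nat with k in Hb by lia.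
    specialize (Hb ltac:(lia)).
    rewrite (prefix_ext w ps (Pf (S j))) by (intros i Hi; apply Hps; lia).
    assert (HjJ : (R + 1) / (INR j + 1) <= (R + 1) / (INR Jn + 1)).
    { apply div_mono; [unfold R; lra|]. split; [apply pos_INR|apply le_INR; auto]. }
    assert (0 <= INR k) by apply pos_INR.
    assert (((R + 1) / (INR j + 1)) * INR k <= eps * INR k) by (apply Rmult_le_compat_r; lra).
    lra.
Qed.

Definition Bz {Q G} (w : edge Q G -> Z) (Ed : list (edge Q G)) : Z :=
  fold_right (fun e acc => Z.max (Z.abs (w e)) acc) 0%Z Ed.

Lemma Bz_spec {Q G} (w : edge Q G -> Z) Ed : (0 <= Bz w Ed)%Z /\ forall e, In e Ed -> (Z.abs (w e) <= Bz w Ed)%Z.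
Proof.
  induction Ed as [|e0 Ed IH]; simpl.
  - split; [lia|tauto].
  - destruct IH as [H0 H1]. split; [lia|]. intros e [<-|He]; [lia|]. specialize (H1 e He). lia.
Qed.

Lemma prefix_boundZ {Q G} (bot : G) (q0 : Q) Ed (w : edge Q G -> Z) p k :
  valid bot q0 Ed p -> (Z.abs (prefix_weight w p k) <= Bz w Ed * Z.of_nat k)%Z.
Proof.
  intros Hv. destruct (Bz_spec w Ed) as [H0 H1]. induction k; simpl.
  - lia.
  - destruct (Hv k) as [Hin _]. specialize (H1 _ Hin). lia.
Qed.

Lemma prefix_bound {Q G} (bot : G) (q0 : Q) Ed (w : edge Q G -> Z) p k :
  valid bot q0 Ed p -> Rabs (IZR (prefix_weight w p k)) <= IZR (Bz w Ed) * INR k.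
Proof.
  intros Hv. rewrite <- abs_IZR, INR_IZR_INZ, <- mult_IZR. apply IZR_le.
  apply prefix_boundZ with (bot := bot) (q0 := q0); auto.
Qed.

Lemma avg_bound {Q G} (w : edge Q G -> Z) p B k :
  0 <= B -> Rabs (IZR (prefix_weight w p k)) <= B * INR k -> Rabs (avg w p k) <= B.
Proof.
  intros HB H. unfold avg. destruct k.
  - simpl. unfold Rdiv. rewrite Rmult_0_l, Rabs_R0. auto.
  - assert (Hk : 0 < INR (S k)) by (apply lt_0_INR; lia).
    unfold Rdiv. rewrite Rabs_mult, (Rabs_pos_eq (/ _)) by (left; apply Rinv_0_lt_compat; auto).
    apply (Rmult_le_reg_r (INR (S k))); auto.
    rewrite Rmult_assoc, Rinv_l by lra. lra.
Qed.

Theorem lemma6 (Q G : Type) (HQ : Finite Q) (HG : Finite G) (bot : G) (q0 : Q)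
  (E : list (edge Q G)) (w : edge Q G -> Z) (Hwf : wps_wf bot E) :
  (exists p, is_path bot q0 E p /\ exists l, is_LimInfAvg w p l /\ l >= 0)
  <->
  (forall eps : R, eps > 0 ->
     exists p, is_path bot q0 E p /\ exists l, is_LimInfAvg w p l /\ l > - eps).
Proof.
  split.
  - intros [p [Hp [l [Hl Hl0]]]] eps Heps. exists p. split; auto. exists l. split; auto. lra.
  - intros H.
    destruct HQ as [lQ HlQ]. destruct HG as [lG HlG].
    set (B := IZR (Bz w E)).
    assert (HB : 0 <= B) by (apply IZR_le; apply Bz_spec).
    assert (Hbound : forall p k, valid bot q0 E p -> Rabs (IZR (prefix_weight w p k)) <= B * INR k)
      by (intros; apply prefix_bound with (bot := bot) (q0 := q0); auto).
    set (KL := list_prod lQ lG).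
    assert (Hm : forall M, exists m, (M <= m)%nat /\ exists kp, In kp KL /\
       exists p D, valid bot q0 E p /\ 0 <= D /\
         (forall k, IZR (prefix_weight w p k) >= - (INR k / (INR m + 1)) - D) /\
         forall M', exists b, (M' <= b)%nat /\ step bot q0 p b /\ kat bot q0 p (fst kp) (snd kp) b).
    { intros M. exists M. split; auto.
      assert (Hm1 : 0 < INR M + 1) by (pose proof (pos_INR M); lra).
      destruct (H (/ (INR M + 1))) as [p [Hp [l [Hl Hl0]]]].
      { apply Rinv_0_lt_compat; auto. }
      apply is_path_valid in Hp.
      destruct (liminf_tail _ _ _ Hl Hl0) as [n0 Hn0].
      destruct (pigeon KL (fun n kp => step bot q0 p n /\ kat bot q0 p (fst kp) (snd kp) n))
        as [kp [Hkp Hinf]].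
      { intros M'. destruct (steps_inf bot q0 p M') as [b [Hb Hs]].
        destruct (run_nonempty bot q0 E p Hwf Hp b) as [z [al Hz]].
        exists b. split; auto. exists (snd (run bot q0 p b), z). split.
        - apply in_prod; auto.
        - split; auto. split; [reflexivity|]. exists al. auto. }
      exists kp. split; auto. exists p, (B * INR n0). split; auto. split.
      { apply Rmult_le_pos; auto. apply pos_INR. }
      split; auto.
      intros k.
      assert (Hk0 : 0 <= INR k / (INR M + 1)).
      { unfold Rdiv. apply Rmult_le_pos; [apply pos_INR|left; apply Rinv_0_lt_compat; auto]. }
      destruct (Nat.lt_ge_cases k n0) as [Hk|Hk].
      + pose proof (Rabs_le_inv' _ _ (Hbound p k Hp)).
        assert (B * INR k <= B * INR n0) by (apply Rmult_le_compat_l; auto; apply le_INR; lia).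
        lra.
      + destruct k.
        * simpl. pose proof (pos_INR n0). assert (0 <= B * INR n0) by (apply Rmult_le_pos; auto). lra.
        * specialize (Hn0 _ Hk). unfold avg in Hn0.
          assert (HkS : 0 < INR (S k)) by (apply lt_0_INR; lia).
          assert (IZR (prefix_weight w p (S k)) > - (INR (S k) / (INR M + 1))).
          { unfold Rdiv in Hn0 |- *.
            apply (Rmult_lt_compat_r (INR (S k))) in Hn0; auto.
            rewrite Rmult_assoc, Rinv_l in Hn0 by lra. lra. }
          assert (0 <= B * INR n0) by (apply Rmult_le_pos; auto; apply pos_INR). lra. }
    destruct (pigeon KL (fun m kp => exists p D, valid bot q0 E p /\ 0 <= D /\
         (forall k, IZR (prefix_weight w p k) >= - (INR k / (INR m + 1)) - D) /\
         forall M', exists b, (M' <= b)%nat /\ step bot q0 p b /\ kat bot q0 p (fst kp) (snd kp) b))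
      as [[q g] [_ Hqg]].
    { intros M. destruct (Hm M) as [m [HmM [kp [Hkp Hx]]]]. exists m. split; auto. eauto. }
    cbn [fst snd] in Hqg.
    assert (Hfam : forall j, exists x, fam_prop bot q0 E w q g j x).
    { intros j. destruct (Hqg j) as [m [Hjm [p [D (Hv & HD & Hw & Hinf)]]]].
      destruct (Hinf 0%nat) as [a (_ & Ha1 & Ha2)].
      exists (p, a, INR a + D + B * INR a). unfold fam_prop. cbn [fst snd].
      split; auto. split; auto. split; auto. split; auto.
      intros t. specialize (Hw (a + t)%nat). pose proof (Rabs_le_inv' _ _ (Hbound p a Hv)).
      rewrite plus_INR in Hw.
      assert (HJ : 0 <= INR j) by apply pos_INR.
      assert (HJm : INR j <= INR m) by (apply le_INR; auto).
      assert (Ha0 : 0 <= INR a) by apply pos_INR.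
      assert (Ht0 : 0 <= INR t) by apply pos_INR.
      assert (h1 : INR a / (INR m + 1) <= INR a).
      { unfold Rdiv. rewrite <- (Rmult_1_r (INR a)) at 2. apply Rmult_le_compat_l; auto.
        apply inv_le1; lra. }
      assert (h2 : INR t / (INR m + 1) <= INR t / (INR j + 1)) by (apply div_mono; lra).
      assert (h3 : (INR a + INR t) / (INR m + 1) = INR a / (INR m + 1) + INR t / (INR m + 1))
        by (field; lra).
      lra. }
    destruct (construct bot q0 E w q g B HB Hbound Hfam) as [ps [Hv Hev]].
    destruct (liminf_exists (avg w ps) B) as [l [Hl Hl0]].
    + intros k. apply avg_bound; auto.
    + intros eps Heps. destruct (Hev eps Heps) as [K HK]. exists (Nat.max K 1). intros k Hk.
      specialize (HK k ltac:(lia)). unfold avg.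
      assert (HkS : 0 < INR k) by (apply lt_0_INR; lia).
      unfold Rdiv. apply Rle_ge. apply (Rmult_le_reg_r (INR k)); auto.
      rewrite Rmult_assoc, Rinv_l by lra. lra.
    + exists ps. split; [apply is_path_valid; auto|]. exists l. split; auto.
Qed.
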